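(* Assume $\gamma\neq\pm2$. For $m=1,2,3$ and all indices $i,j,k$, $$\Big\{\tfrac{\mathfrak h^{(m+1)}}{m+1},\,p_k\Big\}_{(1)}=\Big\{\tfrac{\mathfrak h^{(m)}}{m},\,p_k\Big\}_{(2)},\qquad \Big\{\tfrac{\mathfrak h^{(m+1)}}{m+1},\,q_{ij}\Big\}_{(1)}=\Big\{\tfrac{\mathfrak h^{(m)}}{m},\,q_{ij}\Big\}_{(2)}.$$
   Context: Fix $N\ge2$, $\nu\neq0$. Variables $p_1,\dots,p_N>0$, $q_1,\dots,q_N$ pairwise distinct with fixed ordering; $q_{ij}=q_i-q_j$, $\mathfrak s_{ij}=\mathrm{sgn}(q_i-q_j)$, $\mathfrak s_{ii}=0$. $T=\sum_{i,j}\sqrt{p_ip_j}\cosh\frac{\nu}{2}(q_i-q_j)E_{ij}$, $A=\sum_{i,j}\sqrt{p_ip_j}\sinh\frac{\nu}{2}(q_i-q_j)E_{ij}$, $S=\sum_{i,j}\sqrt{p_ip_j}\,\mathfrak s_{ij}\sinh\frac{\nu}{2}(q_i-q_j)E_{ij}$, and $\mathfrak h^{(m)}=m\,\mathrm{tr}\big((T+\frac{\gamma}{2}A)(S+A)^{m-1}\big)$ (e.g. $\mathfrak h^{(1)}=\sum_ip_i$). First bracket: $\{p_i,p_k\}_{(1)}=0$, $\{q_{ij},p_k\}_{(1)}=\delta_{ik}-\delta_{jk}$, $\{q_{ij},q_{kl}\}_{(1)}=0$. With $\mathcal Q_{ik}=(\gamma-2)e^{\nu|q_{ik}|}-(\gamma+2)e^{-\nu|q_{ik}|}+4$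 and $\mathcal S_{ik}=(\gamma-2)e^{\nu|q_{ik}|}+(\gamma+2)e^{-\nu|q_{ik}|}$, second bracket: $\{p_i,p_k\}_{(2)}=\frac{\nu}{4}\mathfrak s_{ik}p_ip_k(\mathcal Q_{ik}-4)$, $\{q_{ij},p_k\}_{(2)}=-\frac14p_k(\mathcal S_{ik}-\mathcal S_{jk})$, $\{q_{ij},q_{kl}\}_{(2)}=-\frac{1}{4\nu}(\mathfrak s_{ik}\mathcal Q_{ik}-\mathfrak s_{jk}\mathcal Q_{jk}-\mathfrak s_{il}\mathcal Q_{il}+\mathfrak s_{jl}\mathcal Q_{jl})$; both extended by the Leibniz rule. *)

(* Defs.v *)
From HB Require Import structures.
From mathcomp Require Import all_boot all_order all_algebra.
From mathcomp Require Import all_classical all_reals all_analysis.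
Set Implicit Arguments. Unset Strict Implicit. Unset Printing Implicit Defensive.
Import Order.TTheory GRing.Theory Num.Theory.
Import numFieldNormedType.Exports.
Local Open Scope ring_scope.

Section Defs.
Variable R : realType.

Definition coshR (x : R) : R := (expR x + expR (- x)) / 2.
Definition sinhR (x : R) : R := (expR x - expR (- x)) / 2.

Definition obs N := ('I_N -> R) -> ('I_N -> R) -> R.

Definition upd N (x : 'I_N -> R) (i : 'I_N) (t : R) : 'I_N -> R :=
  fun k => if k == i then t else x k.

Definition dP N (F : obs N) (p q : 'I_N -> R) (i : 'I_N) : R :=
  derive1 (fun t => F (upd p i t) q) (p i).
Definition dQ N (F : obs N) (p q : 'I_N -> R) (i : 'I_N) : R :=
  derive1 (fun t => F p (upd q i t)) (q i).

(* A bracket is given by its values on coordinates: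
   PP p q i k = {p_i,p_k},  QP p q i k = {q_i,p_k},  QQ p q i k = {q_i,q_k};
   {p_i,q_k} = - {q_k,p_i}.  Extension by the Leibniz rule. *)
Record bracket N := Bracket {
  PP : ('I_N -> R) -> ('I_N -> R) -> 'I_N -> 'I_N -> R;
  QP : ('I_N -> R) -> ('I_N -> R) -> 'I_N -> 'I_N -> R;
  QQ : ('I_N -> R) -> ('I_N -> R) -> 'I_N -> 'I_N -> R }.

Definition PB N (B : bracket N) (F G : obs N) (p q : 'I_N -> R) : R :=
  \sum_(i < N) \sum_(k < N)
    (  dP F p q i * dP G p q k * PP B p q i k
     + dQ F p q i * dP G p q k * QP B p q i k
     - dP F p q i * dQ G p q k * QP B p q k i
     + dQ F p q i * dQ G p q k * QQ B p q i k).

Definition sgnq N (q : 'I_N -> R) (i j : 'I_N) : R := Num.sg (q i - q j).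

Definition Qc N (gamma nu : R) (q : 'I_N -> R) (i k : 'I_N) : R :=
  (gamma - 2) * expR (nu * `|q i - q k|) - (gamma + 2) * expR (- (nu * `|q i - q k|)) + 4.
Definition Sc N (gamma nu : R) (q : 'I_N -> R) (i k : 'I_N) : R :=
  (gamma - 2) * expR (nu * `|q i - q k|) + (gamma + 2) * expR (- (nu * `|q i - q k|)).

Definition B1 N : bracket N := Bracket
  (fun _ _ _ _ => 0)
  (fun _ _ i k => if i == k then 1 else 0)
  (fun _ _ _ _ => 0).

(* second bracket, written on the lifted coordinates q_i; the q_{ij} = q_i - q_j
   brackets of the paper are recovered by bilinearity *)
Definition B2 N (gamma nu : R) : bracket N := Bracket
  (fun p q i k => nu / 4 * sgnq q i k * p i * p k * (Qc gamma nu q i k - 4))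
  (fun p q i k => - (1 / 4) * p k * Sc gamma nu q i k)
  (fun p q i k => - (1 / (4 * nu)) * (sgnq q i k * Qc gamma nu q i k)).

Definition Tm N (nu : R) (p q : 'I_N -> R) : 'M[R]_N :=
  \matrix_(i, j) (Num.sqrt (p i * p j) * coshR (nu / 2 * (q i - q j))).
Definition Am N (nu : R) (p q : 'I_N -> R) : 'M[R]_N :=
  \matrix_(i, j) (Num.sqrt (p i * p j) * sinhR (nu / 2 * (q i - q j))).
Definition Sm N (nu : R) (p q : 'I_N -> R) : 'M[R]_N :=
  \matrix_(i, j) (Num.sqrt (p i * p j) * sgnq q i j * sinhR (nu / 2 * (q i - q j))).

Fixpoint mxpow N (M : 'M[R]_N) (k : nat) : 'M[R]_N :=
  match k with 0%N => 1%:M | k'.+1 => M *m mxpow M k' end.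

Definition hfrak N (nu gamma : R) (m : nat) : obs N := fun p q =>
  m%:R * \tr ((Tm nu p q + (gamma / 2) *: Am nu p q)
              *m mxpow (Sm nu p q + Am nu p q) (m.-1)).

Definition pcoord N (k : 'I_N) : obs N := fun p _ => p k.
Definition qdiff N (i j : 'I_N) : obs N := fun _ q => q i - q j.

End Defs.

(* Main.v *)
Require Import Defs.
From HB Require Import structures.
From mathcomp Require Import all_boot all_order all_algebra.
From mathcomp Require Import all_classical all_reals all_analysis.
From mathcomp Require Import ring lra.
Import Order.TTheory GRing.Theory Num.Theory.
Local Open Scope ring_scope.

Section S.
Variables (R : realType) (N : nat) (nu gamma : R) (p q : 'I_N -> R).
Hypothesis nu0 : nu != 0.
Hypothesis pos : forall i, 0 < p i.
Hypothesis qinj : injective q.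

Definition E (a : 'I_N) : R := expR (nu / 2 * q a).
Definition w (a : 'I_N) : R := Num.sqrt (p a).

Lemma E_neq0 a : E a != 0. Proof. by rewrite /E gt_eqF // expR_gt0. Qed.
Lemma w_neq0 a : w a != 0. Proof. by rewrite /w gt_eqF // sqrtr_gt0. Qed.
Lemma p_w a : p a = w a ^+ 2. Proof. by rewrite /w sqr_sqrtr // ltW. Qed.
Lemma sqrt_pp a b : Num.sqrt (p a * p b) = w a * w b.
Proof. by rewrite sqrtrM // ltW. Qed.
Lemma expR_diff a b : expR (nu / 2 * (q a - q b)) = E a / E b.
Proof. by rewrite mulrBr expRB. Qed.
Lemma expR_ndiff a b : expR (- (nu / 2 * (q a - q b))) = E b / E a.
Proof. by rewrite -mulrN opprB expR_diff. Qed.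
Lemma cosh_E a b : coshR (nu / 2 * (q a - q b)) = (E a / E b + E b / E a) / 2.
Proof. by rewrite /coshR expR_diff expR_ndiff. Qed.
Lemma sinh_E a b : sinhR (nu / 2 * (q a - q b)) = (E a / E b - E b / E a) / 2.
Proof. by rewrite /sinhR expR_diff expR_ndiff. Qed.
Lemma expabs_lt {a b} : q a < q b -> expR (nu * `|q a - q b|) = (E b / E a) ^+ 2.
Proof.
move=> h; rewrite ltr0_norm ?subr_lt0 // opprB -expR_diff -expRM_natr; congr expR.
by rewrite mulrAC divfK // pnatr_eq0.
Qed.
Lemma expabs_gt {a b} : q b < q a -> expR (nu * `|q a - q b|) = (E a / E b) ^+ 2.
Proof. by move=> h; rewrite distrC expabs_lt. Qed.
Lemma expNabs_lt {a b} : q a < q b -> expR (- (nu * `|q a - q b|)) = (E a / E b) ^+ 2.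
Proof. by move=> h; rewrite expRN expabs_lt // -exprVn invf_div. Qed.
Lemma expNabs_gt {a b} : q b < q a -> expR (- (nu * `|q a - q b|)) = (E b / E a) ^+ 2.
Proof. by move=> h; rewrite distrC expNabs_lt. Qed.
Lemma expabs_eq a : expR (nu * `|q a - q a|) = 1.
Proof. by rewrite subrr normr0 mulr0 expR0. Qed.
Lemma expNabs_eq a : expR (- (nu * `|q a - q a|)) = 1.
Proof. by rewrite subrr normr0 mulr0 oppr0 expR0. Qed.
Lemma sg_lt {a b} : q a < q b -> sgnq q a b = -1.
Proof. by move=> h; rewrite /sgnq ltr0_sg // subr_lt0. Qed.
Lemma sg_gt {a b} : q b < q a -> sgnq q a b = 1.
Proof. by move=> h; rewrite /sgnq gtr0_sg // subr_gt0. Qed.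
Lemma sg_eq a : sgnq q a a = 0.
Proof. by rewrite /sgnq subrr sgr0. Qed.

Definition xx a b := nu / 2 * (q a - q b).
Definition Xe a b := Num.sqrt (p a * p b) * coshR (xx a b) + gamma / 2 * (Num.sqrt (p a * p b) * sinhR (xx a b)).
Definition Ye a b := Num.sqrt (p a * p b) * sgnq q a b * sinhR (xx a b) + Num.sqrt (p a * p b) * sinhR (xx a b).
Definition Xd a b := Num.sqrt (p a * p b) * (nu / 2 * sinhR (xx a b)) + gamma / 2 * (Num.sqrt (p a * p b) * (nu / 2 * coshR (xx a b))).
Definition Yd a b := (sgnq q a b)^+2 * (Num.sqrt (p a * p b) * sgnq q a b * (nu / 2 * coshR (xx a b)) + Num.sqrt (p a * p b) * (nu / 2 * coshR (xx a b))).
Definition piv x k := nu / 4 * sgnq q x k * p k * (Qc gamma nu q x k - 4).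
Definition QPv x k := - (1 / 4) * p k * Sc gamma nu q x k.
Definition QQv x k := - (1 / (4 * nu)) * (sgnq q x k * Qc gamma nu q x k).

Definition PsiLp3 a1 a2 a3 k :=
  Xd k a2 * Ye a2 a3 * Ye a3 a1 * Ye a1 k - Xe k a2 * Ye a2 a3 * Ye a3 a1 * Yd a1 k
+ (Xe a1 k * Yd k a2 * Ye a2 a3 * Ye a3 a1 - Xd a1 k * Ye k a2 * Ye a2 a3 * Ye a3 a1)
+ (Xe a1 a2 * Ye a2 k * Yd k a3 * Ye a3 a1 - Xe a1 a2 * Yd a2 k * Ye k a3 * Ye a3 a1)
+ (Xe a1 a2 * Ye a2 a3 * Ye a3 k * Yd k a1 - Xe a1 a2 * Ye a2 a3 * Yd a3 k * Ye k a1).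
Definition PsiRp3 a1 a2 a3 k :=
  Xe a1 a2 * Ye a2 a3 * Ye a3 a1 * (piv a1 k + piv a2 k + piv a3 k)
+ (QPv a1 k - QPv a2 k) * (Xd a1 a2 * Ye a2 a3 * Ye a3 a1)
+ (QPv a2 k - QPv a3 k) * (Xe a1 a2 * Yd a2 a3 * Ye a3 a1)
+ (QPv a3 k - QPv a1 k) * (Xe a1 a2 * Ye a2 a3 * Yd a3 a1).


Ltac fld := field; rewrite ?E_neq0 ?w_neq0 ?nu0 //.
Lemma Xe_E a b : Xe a b = w a * w b * ((E a / E b + E b / E a) / 2 + gamma / 2 * ((E a / E b - E b / E a) / 2)).
Proof. by rewrite /Xe /xx sqrt_pp cosh_E sinh_E; fld. Qed.
Lemma Xd_E a b : Xd a b = w a * w b * (nu / 2) * ((E a / E b - E b / E a) / 2 + gamma / 2 * ((E a / E b + E b / E a) / 2)).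
Proof. by rewrite /Xd /xx sqrt_pp cosh_E sinh_E; fld. Qed.
Lemma Ye_lt {a b} : q a < q b -> Ye a b = 0.
Proof. by move=> h; rewrite /Ye (sg_lt h); fld. Qed.
Lemma Ye_gt {a b} : q b < q a -> Ye a b = w a * w b * (E a / E b - E b / E a).
Proof. by move=> h; rewrite /Ye (sg_gt h) /xx sqrt_pp sinh_E; fld. Qed.
Lemma Ye_eq a : Ye a a = 0.
Proof. by rewrite /Ye sg_eq /xx sqrt_pp sinh_E; fld. Qed.
Lemma Yd_lt {a b} : q a < q b -> Yd a b = 0.
Proof. by move=> h; rewrite /Yd (sg_lt h); fld. Qed.
Lemma Yd_gt {a b} : q b < q a -> Yd a b = w a * w b * nu * ((E a / E b + E b / E a) / 2).
Proof. by move=> h; rewrite /Yd (sg_gt h) /xx sqrt_pp cosh_E; fld. Qed.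
Lemma Yd_eq a : Yd a a = 0.
Proof. by rewrite /Yd sg_eq; fld. Qed.
Lemma piv_lt {a b} : q a < q b -> piv a b = - (nu / 4) * w b ^+ 2 * ((gamma - 2) * (E b / E a) ^+ 2 - (gamma + 2) * (E a / E b) ^+ 2).
Proof. by move=> h; rewrite /piv /Qc (sg_lt h) (expabs_lt h) (expNabs_lt h) p_w; fld. Qed.
Lemma piv_gt {a b} : q b < q a -> piv a b = (nu / 4) * w b ^+ 2 * ((gamma - 2) * (E a / E b) ^+ 2 - (gamma + 2) * (E b / E a) ^+ 2).
Proof. by move=> h; rewrite /piv /Qc (sg_gt h) (expabs_gt h) (expNabs_gt h) p_w; fld. Qed.
Lemma piv_eq a : piv a a = 0.
Proof. by rewrite /piv sg_eq; fld. Qed.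
Lemma QPv_lt {a b} : q a < q b -> QPv a b = - (1 / 4) * w b ^+ 2 * ((gamma - 2) * (E b / E a) ^+ 2 + (gamma + 2) * (E a / E b) ^+ 2).
Proof. by move=> h; rewrite /QPv /Sc (expabs_lt h) (expNabs_lt h) p_w. Qed.
Lemma QPv_gt {a b} : q b < q a -> QPv a b = - (1 / 4) * w b ^+ 2 * ((gamma - 2) * (E a / E b) ^+ 2 + (gamma + 2) * (E b / E a) ^+ 2).
Proof. by move=> h; rewrite /QPv /Sc (expabs_gt h) (expNabs_gt h) p_w. Qed.
Lemma QPv_eq a : QPv a a = - (1 / 4) * w a ^+ 2 * (2 * gamma).
Proof. by rewrite /QPv /Sc expabs_eq expNabs_eq p_w; fld. Qed.
Lemma QQv_lt {a b} : q a < q b -> QQv a b = (1 / (4 * nu)) * ((gamma - 2) * (E b / E a) ^+ 2 - (gamma + 2) * (E a / E b) ^+ 2 + 4).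
Proof. by move=> h; rewrite /QQv /Qc (sg_lt h) (expabs_lt h) (expNabs_lt h); fld. Qed.
Lemma QQv_gt {a b} : q b < q a -> QQv a b = - (1 / (4 * nu)) * ((gamma - 2) * (E a / E b) ^+ 2 - (gamma + 2) * (E b / E a) ^+ 2 + 4).
Proof. by move=> h; rewrite /QQv /Qc (sg_gt h) (expabs_gt h) (expNabs_gt h); fld. Qed.
Lemma QQv_eq a : QQv a a = 0.
Proof. by rewrite /QQv sg_eq; fld. Qed.

Ltac splitq x y := let h := fresh "h" in
  case: (ltgtP (q x) (q y)) => [h|h|/qinj h]; [ | | subst ].
Ltac sat := repeat match goal with
 | h1 : is_true (q ?x < q ?y), h2 : is_true (q ?y < q ?z) |- _ =>
   lazymatch goal with _ : is_true (q x < q z) |- _ => fail | _ => have := lt_trans h1 h2; move=> ? end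
 end.
Ltac allsplit := repeat (match goal with
  | x : 'I_N, y : 'I_N |- _ =>
     assert_fails (constr_eq x y);
     lazymatch goal with
     | _ : is_true (q x < q y) |- _ => fail
     | _ : is_true (q y < q x) |- _ => fail
     | _ => splitq x y; sat
     end
  end).
Ltac rwsg := repeat match goal with h : is_true (q ?x < q ?y) |- _ =>
  rewrite ?(Ye_lt h) ?(Ye_gt h) ?(Yd_lt h) ?(Yd_gt h) ?(piv_lt h) ?(piv_gt h) ?(QPv_lt h) ?(QPv_gt h) ?(QQv_lt h) ?(QQv_gt h); clear h end;
  rewrite ?Ye_eq ?Yd_eq ?piv_eq ?QPv_eq ?QQv_eq ?Xe_E ?Xd_E.
Ltac fin := rwsg; fld.


Definition PsiLp1 a1 k :=
  Xd k a1 * Ye a1 k - Xe k a1 * Yd a1 k + (Xe a1 k * Yd k a1 - Xd a1 k * Ye k a1).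
Definition PsiRp1 a1 k :=
  Xe a1 a1 * piv a1 k + (QPv a1 k - QPv a1 k) * Xd a1 a1.
Definition PsiLp2 a1 a2 k :=
  Xd k a2 * Ye a2 a1 * Ye a1 k - Xe k a2 * Ye a2 a1 * Yd a1 k
+ (Xe a1 k * Yd k a2 * Ye a2 a1 - Xd a1 k * Ye k a2 * Ye a2 a1)
+ (Xe a1 a2 * Ye a2 k * Yd k a1 - Xe a1 a2 * Yd a2 k * Ye k a1).
Definition PsiRp2 a1 a2 k :=
  Xe a1 a2 * Ye a2 a1 * (piv a1 k + piv a2 k)
+ (QPv a1 k - QPv a2 k) * (Xd a1 a2 * Ye a2 a1)
+ (QPv a2 k - QPv a1 k) * (Xe a1 a2 * Yd a2 a1).

Definition PsiLq1 a1 i := - (p i)^-1 * (Xe i a1 * Ye a1 i + Xe a1 i * Ye i a1).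
Definition PsiRq1 a1 i := Xe a1 a1 * (- (p a1)^-1 * QPv i a1) + (QQv a1 i - QQv a1 i) * Xd a1 a1.
Definition PsiLq2 a1 a2 i := - (p i)^-1 * (Xe i a2 * Ye a2 a1 * Ye a1 i + Xe a1 i * Ye i a2 * Ye a2 a1
   + Xe a1 a2 * Ye a2 i * Ye i a1).
Definition PsiRq2 a1 a2 i :=
  Xe a1 a2 * Ye a2 a1 * (- (p a1)^-1 * QPv i a1 - (p a2)^-1 * QPv i a2)
+ (QQv a1 i - QQv a2 i) * (Xd a1 a2 * Ye a2 a1)
+ (QQv a2 i - QQv a1 i) * (Xe a1 a2 * Yd a2 a1).
Definition PsiLq3 a1 a2 a3 i := - (p i)^-1 * (
   Xe i a2 * Ye a2 a3 * Ye a3 a1 * Ye a1 i + Xe a1 i * Ye i a2 * Ye a2 a3 * Ye a3 a1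
 + Xe a1 a2 * Ye a2 i * Ye i a3 * Ye a3 a1 + Xe a1 a2 * Ye a2 a3 * Ye a3 i * Ye i a1).
Definition PsiRq3 a1 a2 a3 i :=
  Xe a1 a2 * Ye a2 a3 * Ye a3 a1 * (- (p a1)^-1 * QPv i a1 - (p a2)^-1 * QPv i a2 - (p a3)^-1 * QPv i a3)
+ (QQv a1 i - QQv a2 i) * (Xd a1 a2 * Ye a2 a3 * Ye a3 a1)
+ (QQv a2 i - QQv a3 i) * (Xe a1 a2 * Yd a2 a3 * Ye a3 a1)
+ (QQv a3 i - QQv a1 i) * (Xe a1 a2 * Ye a2 a3 * Yd a3 a1).
Ltac fin2 := rwsg; rewrite ?p_w; fld.
Lemma tuple_p1 a1 k : PsiLp1 a1 k = PsiRp1 a1 k.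
Proof. rewrite /PsiLp1 /PsiRp1.
allsplit.
all: fin2.
Qed.
Lemma tuple_p2 a1 a2 k : PsiLp2 a1 a2 k = PsiRp2 a1 a2 k.
Proof. rewrite /PsiLp2 /PsiRp2.
allsplit.
all: fin2.
Qed.
Lemma tuple_q1 a1 i : PsiLq1 a1 i - PsiRq1 a1 i = PsiLq1 a1 a1 - PsiRq1 a1 a1.
Proof. rewrite /PsiLq1 /PsiRq1.
allsplit.
all: fin2.
Qed.
Lemma tuple_q2 a1 a2 i : PsiLq2 a1 a2 i - PsiRq2 a1 a2 i = PsiLq2 a1 a2 a1 - PsiRq2 a1 a2 a1.
Proof. rewrite /PsiLq2 /PsiRq2.
allsplit.
all: fin2.
Qed.
Lemma tuple_p3 a1 a2 a3 k : PsiLp3 a1 a2 a3 k = PsiRp3 a1 a2 a3 k.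
Proof.
rewrite /PsiLp3 /PsiRp3.
allsplit.
all: fin2.
Qed.
Lemma tuple_q3 a1 a2 a3 i : PsiLq3 a1 a2 a3 i - PsiRq3 a1 a2 a3 i = PsiLq3 a1 a2 a3 a1 - PsiRq3 a1 a2 a3 a1.
Proof.
rewrite /PsiLq3 /PsiRq3.
allsplit.
all: fin2.
Qed.

Definition PPv x k := nu / 4 * sgnq q x k * p x * p k * (Qc gamma nu q x k - 4).
Lemma PPv_piv x k : PPv x k = p x * piv x k.
Proof. by rewrite /PPv /piv; ring. Qed.

Fixpoint dpow (Y D : 'M[R]_N) (n : nat) : 'M[R]_N :=
  match n with 0%N => 0 | n'.+1 => D *m mxpow Y n' + Y *m dpow Y D n' end.

Definition Xm : 'M[R]_N := Tm nu p q + (gamma / 2) *: Am nu p q.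
Definition Ym : 'M[R]_N := Sm nu p q + Am nu p q.
Definition Xdm : 'M[R]_N := \matrix_(a, b) Xd a b.
Definition Ydm : 'M[R]_N := \matrix_(a, b) Yd a b.
Definition Ei (i : 'I_N) : 'M[R]_N := delta_mx i i.
Definition DpX i := (2 * p i)^-1 *: (Ei i *m Xm + Xm *m Ei i).
Definition DpY i := (2 * p i)^-1 *: (Ei i *m Ym + Ym *m Ei i).
Definition DqX i := Ei i *m Xdm - Xdm *m Ei i.
Definition DqY i := Ei i *m Ydm - Ydm *m Ei i.

Lemma Xm_E a b : Xm a b = Xe a b.
Proof. by rewrite /Xm /Xe /xx !mxE. Qed.
Lemma Ym_E a b : Ym a b = Ye a b.
Proof. by rewrite /Ym /Ye /xx !mxE. Qed.
Lemma Xdm_E a b : Xdm a b = Xd a b.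
Proof. by rewrite /Xdm !mxE. Qed.
Lemma Ydm_E a b : Ydm a b = Yd a b.
Proof. by rewrite /Ydm !mxE. Qed.

Lemma Ei_mul (A : 'M[R]_N) i a b : (Ei i *m A) a b = (a == i)%:R * A a b.
Proof.
rewrite mxE (bigD1 i) //= big1 ?addr0; last first.
  by move=> c /negPf ci; rewrite /Ei mxE ci andbF mul0r.
rewrite /Ei mxE eqxx andbT; case: eqP => [->|] //; by rewrite !mul0r.
Qed.

Lemma trE0 (A : 'M[R]_N) i : \tr (Ei i *m A) = A i i.
Proof.
rewrite /mxtrace (bigD1 i) //= big1 ?addr0 ?Ei_mul ?eqxx ?mul1r //.
by move=> c /negPf ci; rewrite Ei_mul ci mul0r.
Qed.
Lemma trE1 (A B : 'M[R]_N) i : \tr (A *m (Ei i *m B)) = (B *m A) i i.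
Proof. by rewrite mxtrace_mulC -mulmxA trE0. Qed.
Lemma trE2 (A B C : 'M[R]_N) i : \tr (A *m (B *m (Ei i *m C))) = (C *m (A *m B)) i i.
Proof. by rewrite mulmxA trE1. Qed.
Lemma trE3 (A B C D : 'M[R]_N) i : \tr (A *m (B *m (C *m (Ei i *m D)))) = (D *m (A *m (B *m C))) i i.
Proof. by rewrite mulmxA trE2 -mulmxA. Qed.
Lemma trE4 (A B C D F : 'M[R]_N) i : \tr (A *m (B *m (C *m (D *m (Ei i *m F))))) = (F *m (A *m (B *m (C *m D)))) i i.
Proof. by rewrite mulmxA trE3 -!mulmxA. Qed.
Lemma trEr1 (A : 'M[R]_N) i : \tr (A *m Ei i) = A i i.
Proof. by rewrite mxtrace_mulC trE0. Qed.
Lemma trEr2 (A B : 'M[R]_N) i : \tr (A *m (B *m Ei i)) = (A *m B) i i.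
Proof. by rewrite mulmxA trEr1. Qed.
Lemma trEr3 (A B C : 'M[R]_N) i : \tr (A *m (B *m (C *m Ei i))) = (A *m (B *m C)) i i.
Proof. by rewrite mulmxA trEr2 -mulmxA. Qed.
Lemma trEr4 (A B C D : 'M[R]_N) i : \tr (A *m (B *m (C *m (D *m Ei i)))) = (A *m (B *m (C *m D))) i i.
Proof. by rewrite mulmxA trEr3 -!mulmxA. Qed.

Definition S1 (f : 'I_N -> R) := \sum_(x < N) f x.
Definition S2 (f : 'I_N -> 'I_N -> R) := \sum_(x < N) \sum_(y < N) f x y.
Definition S3 (f : 'I_N -> 'I_N -> 'I_N -> R) := \sum_(x < N) \sum_(y < N) \sum_(z < N) f x y z.

Lemma e2 (A B : 'M[R]_N) k : (A *m B) k k = S1 (fun x => A k x * B x k).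
Proof. by rewrite mxE. Qed.
Lemma e3 (A B C : 'M[R]_N) k : (A *m (B *m C)) k k = S2 (fun x y => A k x * (B x y * C y k)).
Proof. rewrite mxE /S2; apply: eq_bigr => x _; rewrite mxE big_distrr /=; apply: eq_bigr => y _; done. Qed.
Lemma e4 (A B C D : 'M[R]_N) k : (A *m (B *m (C *m D))) k k = S3 (fun x y z => A k x * (B x y * (C y z * D z k))).
Proof.
rewrite mxE /S3; apply: eq_bigr => x _; rewrite mxE big_distrr /=; apply: eq_bigr => y _.
by rewrite mxE !big_distrr.
Qed.

Lemma S1D f g : S1 f + S1 g = S1 (fun x => f x + g x).
Proof. by rewrite /S1 -big_split. Qed.
Lemma S1B f g : S1 f - S1 g = S1 (fun x => f x - g x).
Proof. by rewrite /S1 -sumrB. Qed.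
Lemma S1Z c f : c * S1 f = S1 (fun x => c * f x).
Proof. by rewrite /S1 big_distrr. Qed.
Lemma S1Zr c f : S1 f * c = S1 (fun x => f x * c).
Proof. by rewrite /S1 big_distrl. Qed.
Lemma S2D f g : S2 f + S2 g = S2 (fun x y => f x y + g x y).
Proof. by rewrite /S2 -big_split; apply: eq_bigr => x _; rewrite -big_split. Qed.
Lemma S2B f g : S2 f - S2 g = S2 (fun x y => f x y - g x y).
Proof. by rewrite /S2 -sumrB; apply: eq_bigr => x _; rewrite -sumrB. Qed.
Lemma S2Z c f : c * S2 f = S2 (fun x y => c * f x y).
Proof. by rewrite /S2 big_distrr; apply: eq_bigr => x _; rewrite big_distrr. Qed.
Lemma S2Zr c f : S2 f * c = S2 (fun x y => f x y * c).
Proof. by rewrite /S2 big_distrl; apply: eq_bigr => x _; rewrite big_distrl. Qed.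
Lemma S3D f g : S3 f + S3 g = S3 (fun x y z => f x y z + g x y z).
Proof.
rewrite /S3 -big_split; apply: eq_bigr => x _; rewrite -big_split; apply: eq_bigr => y _.
by rewrite -big_split.
Qed.
Lemma S3B f g : S3 f - S3 g = S3 (fun x y z => f x y z - g x y z).
Proof.
rewrite /S3 -sumrB; apply: eq_bigr => x _; rewrite -sumrB; apply: eq_bigr => y _.
by rewrite -sumrB.
Qed.
Lemma S3Z c f : c * S3 f = S3 (fun x y z => c * f x y z).
Proof.
rewrite /S3 big_distrr; apply: eq_bigr => x _; rewrite big_distrr; apply: eq_bigr => y _.
by rewrite big_distrr.
Qed.

Lemma S3_rot f : S3 (fun x y z => f y z x) = S3 f.
Proof.
rewrite /S3 exchange_big /=; apply: eq_bigr => y _.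
by rewrite exchange_big.
Qed.
Lemma S2_swap f : S2 (fun x y => f y x) = S2 f.
Proof. by rewrite /S2 exchange_big. Qed.

Lemma S3_sym F G : (forall x y z, F x y z + F y z x + F z x y = G x y z + G y z x + G z x y) ->
  S3 F = S3 G.
Proof.
move=> H.
have HF : S3 (fun x y z => F x y z + F y z x + F z x y) = 3%:R * S3 F.
  rewrite -!S3D (S3_rot F) (S3_rot (fun x y z => F z x y)); ring.
have HG : S3 (fun x y z => G x y z + G y z x + G z x y) = 3%:R * S3 G.
  rewrite -!S3D (S3_rot G) (S3_rot (fun x y z => G z x y)); ring.
have E3 : S3 (fun x y z => F x y z + F y z x + F z x y) = S3 (fun x y z => G x y z + G y z x + G z x y).
  by rewrite /S3; apply: eq_bigr => x _; apply: eq_bigr => y _; apply: eq_bigr => z _.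
apply: (@mulfI _ 3%:R); first by rewrite pnatr_eq0.
by rewrite -HF -HG.
Qed.
Lemma S2_sym F G : (forall x y, F x y + F y x = G x y + G y x) -> S2 F = S2 G.
Proof.
move=> H.
have HF : S2 (fun x y => F x y + F y x) = 2%:R * S2 F.
  by rewrite -S2D (S2_swap F); ring.
have HG : S2 (fun x y => G x y + G y x) = 2%:R * S2 G.
  by rewrite -S2D (S2_swap G); ring.
apply: (@mulfI _ 2%:R); first by rewrite pnatr_eq0.
rewrite -HF -HG /S2; apply: eq_bigr => x _; apply: eq_bigr => y _; done.
Qed.
Lemma S1N f : - S1 f = S1 (fun x => - f x).
Proof. by rewrite /S1 -sumrN. Qed.
Lemma S2N f : - S2 f = S2 (fun x y => - f x y).
Proof. by rewrite /S2 -sumrN; apply: eq_bigr => x _; rewrite -sumrN. Qed.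
Lemma S3N f : - S3 f = S3 (fun x y z => - f x y z).
Proof.
rewrite /S3 -sumrN; apply: eq_bigr => x _; rewrite -sumrN; apply: eq_bigr => y _.
by rewrite -sumrN.
Qed.
Lemma S2_of (f : 'I_N -> 'I_N -> R) : \sum_(x < N) S1 (f x) = S2 f.
Proof. by []. Qed.
Lemma S3_of (f : 'I_N -> 'I_N -> 'I_N -> R) : \sum_(x < N) S2 (f x) = S3 f.
Proof. by []. Qed.
Lemma p_neq0 a : p a != 0. Proof. by rewrite gt_eqF. Qed.

Ltac trnorm := rewrite /=;
  rewrite ?mulmx1 ?mulmx0 ?addr0;
  rewrite -?(scalemxAl, scalemxAr);
  rewrite ?(mulmxDl, mulmxDr, mulmxBl, mulmxBr, mulmxN, mulNmx, scalerDr, scalerBr);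
  rewrite -?(scalemxAl, scalemxAr);
  rewrite ?(mxtraceD, raddfB, raddfN, mxtraceZ, mxtrace0) /=;
  rewrite -?mulmxA;
  rewrite ?(trE0, trE1, trE2, trE3, trE4, trEr1, trEr2, trEr3, trEr4);
  rewrite -?mulmxA;
  rewrite ?e4 ?e3 ?e2.
Ltac smerge3 := do 4 rewrite ?(S3D, S3B, S3Z, S3N).
Ltac smerge2 := do 4 rewrite ?(S2D, S2B, S2Z, S2Zr, S2N).
Ltac smerge1 := do 4 rewrite ?(S1D, S1B, S1Z, S1Zr, S1N).

Section Gen.
Variables (X Y Xdm Ydm : 'M[R]_N).
Hypotheses (hX : forall a b, X a b = Xe a b) (hY : forall a b, Y a b = Ye a b)
  (hXd : forall a b, Xdm a b = Xd a b) (hYd : forall a b, Ydm a b = Yd a b).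

Definition LP n k := \tr ((Ei k *m Xdm - Xdm *m Ei k) *m mxpow Y n + X *m dpow Y (Ei k *m Ydm - Ydm *m Ei k) n).
Definition DPt n x := \tr (((2 * p x)^-1 *: (Ei x *m X + X *m Ei x)) *m mxpow Y n + X *m dpow Y ((2 * p x)^-1 *: (Ei x *m Y + Y *m Ei x)) n).
Definition RP n k := \sum_(x < N) (DPt n x * PPv x k + LP n x * QPv x k).
Definition RQ n i := \sum_(x < N) (- DPt n x * QPv i x + LP n x * QQv x i).

Lemma peq1_gen k : LP 1 k = RP 0 k.
Proof.
rewrite /RP /LP /DPt; trnorm; smerge1.
under eq_bigr => x _ do trnorm.
rewrite /S1; apply: eq_bigr => x _.
rewrite ?hX ?hY ?hXd ?hYd !PPv_piv.
transitivity (PsiLp1 x k); first by rewrite /PsiLp1; field.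
rewrite tuple_p1 /PsiRp1; field; by rewrite ?p_neq0.
Qed.

Lemma peq2_gen k : LP 2 k = RP 1 k.
Proof.
rewrite /RP /LP /DPt; trnorm; smerge2.
under eq_bigr => x _ do (trnorm; smerge1).
rewrite S2_of; apply: S2_sym => x y.
rewrite ?hX ?hY ?hXd ?hYd !PPv_piv.
transitivity (PsiLp2 x y k + PsiLp2 y x k); first by rewrite /PsiLp2; field.
rewrite !tuple_p2 /PsiRp2; field; by rewrite ?p_neq0.
Qed.

Lemma peq3_gen k : LP 3 k = RP 2 k.
Proof.
rewrite /RP /LP /DPt; trnorm; smerge3.
under eq_bigr => x _ do (trnorm; smerge2).
rewrite S3_of; apply: S3_sym => x y z.
rewrite ?hX ?hY ?hXd ?hYd !PPv_piv.
transitivity (PsiLp3 x y z k + PsiLp3 y z x k + PsiLp3 z x y k).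
  rewrite /PsiLp3; field; by rewrite ?p_neq0.
rewrite !tuple_p3 /PsiRp3; field; by rewrite ?p_neq0.
Qed.

Lemma qeq1_gen i j : - DPt 1 i - RQ 0 i = - DPt 1 j - RQ 0 j.
Proof.
rewrite /RQ /LP /DPt.
under eq_bigr => x _ do trnorm.
under [in RHS]eq_bigr => x _ do trnorm.
trnorm; smerge1.
rewrite /S1; apply: eq_bigr => x _.
rewrite ?hX ?hY ?hXd ?hYd.
transitivity (PsiLq1 x i - PsiRq1 x i).
  rewrite /PsiLq1 /PsiRq1; field; by rewrite ?p_neq0.
rewrite tuple_q1; symmetry.
transitivity (PsiLq1 x j - PsiRq1 x j).
  rewrite /PsiLq1 /PsiRq1; field; by rewrite ?p_neq0.
by rewrite tuple_q1.
Qed.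

Lemma qeq2_gen i j : - DPt 2 i - RQ 1 i = - DPt 2 j - RQ 1 j.
Proof.
rewrite /RQ /LP /DPt.
under eq_bigr => x _ do (trnorm; smerge1).
under [in RHS]eq_bigr => x _ do (trnorm; smerge1).
rewrite !S2_of.
trnorm; smerge2.
apply: S2_sym => x y.
rewrite ?hX ?hY ?hXd ?hYd.
transitivity ((PsiLq2 x y i - PsiRq2 x y i) + (PsiLq2 y x i - PsiRq2 y x i)).
  rewrite /PsiLq2 /PsiRq2; field; by rewrite ?p_neq0.
rewrite (tuple_q2 x y i) (tuple_q2 y x i); symmetry.
transitivity ((PsiLq2 x y j - PsiRq2 x y j) + (PsiLq2 y x j - PsiRq2 y x j)).
  rewrite /PsiLq2 /PsiRq2; field; by rewrite ?p_neq0.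
by rewrite (tuple_q2 x y j) (tuple_q2 y x j).
Qed.

Lemma qeq3_gen i j : - DPt 3 i - RQ 2 i = - DPt 3 j - RQ 2 j.
Proof.
rewrite /RQ /LP /DPt.
under eq_bigr => x _ do (trnorm; smerge2).
under [in RHS]eq_bigr => x _ do (trnorm; smerge2).
rewrite !S3_of.
trnorm; smerge3.
apply: S3_sym => x y z.
rewrite ?hX ?hY ?hXd ?hYd.
transitivity ((PsiLq3 x y z i - PsiRq3 x y z i) + (PsiLq3 y z x i - PsiRq3 y z x i) + (PsiLq3 z x y i - PsiRq3 z x y i)).
  rewrite /PsiLq3 /PsiRq3; field; by rewrite ?p_neq0.
rewrite (tuple_q3 x y z i) (tuple_q3 y z x i) (tuple_q3 z x y i); symmetry.
transitivity ((PsiLq3 x y z j - PsiRq3 x y z j) + (PsiLq3 y z x j - PsiRq3 y z x j) + (PsiLq3 z x y j - PsiRq3 z x y j)).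
  rewrite /PsiLq3 /PsiRq3; field; by rewrite ?p_neq0.
by rewrite (tuple_q3 x y z j) (tuple_q3 y z x j) (tuple_q3 z x y j).
Qed.
End Gen.
Definition mder (f : R -> 'M[R]_N) (t : R) (D : 'M[R]_N) :=
  forall a b, is_derive t 1 (fun s => f s a b) (D a b).

Lemma isd_add {f g : R -> R} {t df dg : R} : is_derive t 1 f df -> is_derive t 1 g dg ->
  is_derive t 1 (fun s => f s + g s) (df + dg).
Proof. by move=> hf hg; apply: is_deriveD. Qed.

Lemma isd_mul {f g : R -> R} {t df dg : R} : is_derive t 1 f df -> is_derive t 1 g dg ->
  is_derive t 1 (fun s => f s * g s) (df * g t + f t * dg).
Proof.
move=> hf hg; have H := is_deriveM hf hg.
apply: is_derive_eq H _.
by rewrite addrC [df * _]mulrC.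
Qed.

Lemma isd_cst (c t : R) : is_derive t 1 (fun _ => c) 0.
Proof. exact: is_derive_cst. Qed.

Lemma isd_scale (c : R) {f : R -> R} {t df : R} : is_derive t 1 f df ->
  is_derive t 1 (fun s => c * f s) (c * df).
Proof. by move=> hf; have := is_deriveZ c hf. Qed.

Lemma isd_sum (h : 'I_N -> R -> R) (t : R) (dh : 'I_N -> R) :
  (forall i, is_derive t 1 (h i) (dh i)) ->
  is_derive t 1 (fun s => \sum_(i < N) h i s) (\sum_(i < N) dh i).
Proof.
move=> H; have := is_derive_sum H.
suff -> : (\sum_(i < N) h i) = (fun s => \sum_(i < N) h i s) by [].
by apply/funext => s; rewrite fct_sumE.
Qed.

Lemma isd_eq {f : R -> R} {t df : R} (df' : R) : is_derive t 1 f df -> df = df' -> is_derive t 1 f df'.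
Proof. by move=> h <-. Qed.

Lemma mder_add (f g : R -> 'M[R]_N) (t : R) Df Dg : mder f t Df -> mder g t Dg ->
  mder (fun s => f s + g s) t (Df + Dg).
Proof.
move=> hf hg a b; rewrite mxE.
under [fun s => _]funext => s do rewrite mxE.
exact: isd_add.
Qed.

Lemma mder_cst (M : 'M[R]_N) (t : R) : mder (fun _ => M) t 0.
Proof. by move=> a b; rewrite mxE; exact: isd_cst. Qed.

Lemma mder_mul (f g : R -> 'M[R]_N) (t : R) Df Dg : mder f t Df -> mder g t Dg ->
  mder (fun s => f s *m g s) t (Df *m g t + f t *m Dg).
Proof.
move=> hf hg a b; rewrite !mxE -big_split /=.
under [fun s => _]funext => s do rewrite mxE.
apply: isd_sum => c.
exact: isd_mul.
Qed.

Lemma mder_pow (f : R -> 'M[R]_N) (t : R) Df n : mder f t Df ->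
  mder (fun s => mxpow (f s) n) t (dpow (f t) Df n).
Proof.
move=> hf; elim: n => [|n IH] /=; first exact: mder_cst.
exact: mder_mul.
Qed.

Lemma isd_trace (f : R -> 'M[R]_N) (t : R) Df : mder f t Df ->
  is_derive t 1 (fun s => \tr (f s)) (\tr Df).
Proof. by move=> hf; apply: isd_sum => i; exact: hf. Qed.

Arguments mder_mul {f g t Df Dg}.
Arguments mder_pow {f t Df} n.
Arguments isd_trace {f t Df}.

Lemma upd_same (x : 'I_N -> R) i : upd x i (x i) = x.
Proof. by apply/funext => a; rewrite /upd; case: eqP => [->|]. Qed.

Lemma isd_upd (x : 'I_N -> R) i a (t0 : R) : is_derive t0 1 (fun t => upd x i t a) ((a == i)%:R).
Proof.
rewrite /upd; case: eqP => _ /=; last exact: isd_cst.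
exact: is_derive_id.
Qed.

Lemma mul_Ei (A : 'M[R]_N) i a b : (A *m Ei i) a b = A a b * (b == i)%:R.
Proof.
rewrite mxE (bigD1 i) //= big1 ?addr0.
  rewrite /Ei mxE eqxx /=; case: (eqVneq b i) => [->|bi]; first by rewrite ?eqxx ?mulr1.
  by rewrite ?(negPf bi) !mulr0.
by move=> c /negPf ci; rewrite /Ei mxE ci /= mulr0.
Qed.

Lemma isd_sqrt_pp i a b : is_derive (p i) 1 (fun t => Num.sqrt (upd p i t a * upd p i t b))
  ((2 * p i)^-1 * (((a == i)%:R + (b == i)%:R) * Num.sqrt (p a * p b))).
Proof.
have hu := isd_mul (isd_upd p i a (p i)) (isd_upd p i b (p i)).
have hpos : 0 < p a * p b by rewrite mulr_gt0.
have hs : is_derive (upd p i (p i) a * upd p i (p i) b) 1 Num.sqrt (2 * Num.sqrt (p a * p b))^-1.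
  by rewrite upd_same; apply: is_derive1_sqrt.
have H := is_derive1_comp (f := Num.sqrt) (g := fun t => upd p i t a * upd p i t b) hs hu.
rewrite upd_same in H.
apply: isd_eq H _.
rewrite sqrt_pp.
case: (eqVneq a i) => [->|ai]; case: (eqVneq b i) => [->|bi] /=; rewrite ?eqxx ?(negPf ai) ?(negPf bi) ?p_w /=.
- by field; rewrite ?w_neq0.
- by field; rewrite ?w_neq0.
- by field; rewrite ?w_neq0.
- by rewrite !(mul0r, mulr0, addr0).
Qed.

Lemma mxE_add (A B : 'M[R]_N) a b : (A + B) a b = A a b + B a b.
Proof. by rewrite mxE. Qed.
Lemma mxE_sub (A B : 'M[R]_N) a b : (A - B) a b = A a b - B a b.
Proof. by rewrite !mxE. Qed.
Lemma mxE_scale c (A : 'M[R]_N) a b : (c *: A) a b = c * A a b.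
Proof. by rewrite mxE. Qed.
Lemma DpX_E i a b : DpX i a b = (2 * p i)^-1 * ((a == i)%:R * Xm a b + Xm a b * (b == i)%:R).
Proof. by rewrite /DpX mxE_scale mxE_add Ei_mul mul_Ei. Qed.
Lemma DpY_E i a b : DpY i a b = (2 * p i)^-1 * ((a == i)%:R * Ym a b + Ym a b * (b == i)%:R).
Proof. by rewrite /DpY mxE_scale mxE_add Ei_mul mul_Ei. Qed.
Lemma DqX_E i a b : DqX i a b = (a == i)%:R * Xd a b - Xd a b * (b == i)%:R.
Proof. by rewrite /DqX mxE_sub Ei_mul mul_Ei !Xdm_E. Qed.
Lemma DqY_E i a b : DqY i a b = (a == i)%:R * Yd a b - Yd a b * (b == i)%:R.
Proof. by rewrite /DqY mxE_sub Ei_mul mul_Ei !Ydm_E. Qed.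

Definition Xpf i t : 'M[R]_N := Tm nu (upd p i t) q + (gamma / 2) *: Am nu (upd p i t) q.
Definition Ypf i t : 'M[R]_N := Sm nu (upd p i t) q + Am nu (upd p i t) q.
Definition Xqf i t : 'M[R]_N := Tm nu p (upd q i t) + (gamma / 2) *: Am nu p (upd q i t).
Definition Yqf i t : 'M[R]_N := Sm nu p (upd q i t) + Am nu p (upd q i t).

Lemma mder_Xp i : mder (Xpf i) (p i) (DpX i).
Proof.
move=> a b.
have H := isd_add (isd_mul (isd_sqrt_pp i a b) (isd_cst (coshR (nu / 2 * (q a - q b))) (p i)))
   (isd_scale (gamma / 2) (isd_mul (isd_sqrt_pp i a b) (isd_cst (sinhR (nu / 2 * (q a - q b))) (p i)))).
under [fun s => _]funext => s do rewrite /Xpf !mxE.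
apply: isd_eq H _.
rewrite DpX_E /Xm !mxE; ring.
Qed.

Lemma mder_Yp i : mder (Ypf i) (p i) (DpY i).
Proof.
move=> a b.
have H := isd_add (isd_mul (isd_sqrt_pp i a b) (isd_cst (sgnq q a b * sinhR (nu / 2 * (q a - q b))) (p i)))
   (isd_mul (isd_sqrt_pp i a b) (isd_cst (sinhR (nu / 2 * (q a - q b))) (p i))).
under [fun s => _]funext => s do rewrite /Ypf !mxE -mulrA.
apply: isd_eq H _.
rewrite DpY_E /Ym !mxE; ring.
Qed.

Lemma upd_diff i a b (t : R) : upd q i t a - upd q i t b = ((a == i)%:R - (b == i)%:R) * (t - q i) + (q a - q b).
Proof.
rewrite /upd; case: (eqVneq a i) => [->|ai]; case: (eqVneq b i) => [->|bi] /=; rewrite ?eqxx ?(negPf ai) ?(negPf bi) /=; ring.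
Qed.

Lemma isd_diffq (G : R -> R) dG i a b : (a != b -> is_derive (q a - q b) 1 G dG) ->
  is_derive (q i) 1 (fun t => G (upd q i t a - upd q i t b)) (((a == i)%:R - (b == i)%:R) * dG).
Proof.
case: (eqVneq a b) => [<- _|ab H].
  under [fun t => _]funext => t do rewrite subrr.
  by rewrite subrr mul0r; exact: isd_cst.
set c := ((a == i)%:R - (b == i)%:R).
under [fun t => _]funext => t do rewrite upd_diff -/c.
have hg : is_derive (q i) 1 (fun t => c * (t - q i) + (q a - q b)) c.
  have h1 : is_derive (q i) 1 (fun t : R => t - q i) 1.
    by have := isd_add (is_derive_id (q i) 1) (isd_cst (- q i) (q i)); rewrite addr0.
  by have := isd_add (isd_scale c h1) (isd_cst (q a - q b) (q i)); rewrite mulr1 addr0.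
have hf : is_derive ((fun t => c * (t - q i) + (q a - q b)) (q i)) 1 G dG.
  by rewrite /= subrr mulr0 add0r; exact: H.
have := is_derive1_comp (f := G) (g := fun t => c * (t - q i) + (q a - q b)) hf hg.
by rewrite mulrC.
Qed.

Lemma isd_expc (c d : R) : is_derive d 1 (fun x => expR (c * x)) (c * expR (c * d)).
Proof.
have hg : is_derive d 1 (fun x : R => c * x) c.
  by have := isd_scale c (is_derive_id d 1); rewrite mulr1.
have hf : is_derive ((fun x : R => c * x) d) 1 expR (expR (c * d)) by exact: is_derive_expR.
have := is_derive1_comp (f := expR) (g := fun x : R => c * x) hf hg.
by rewrite mulrC.
Qed.

Lemma isd_cosh (c d : R) : is_derive d 1 (fun x => coshR (c * x)) (c * sinhR (c * d)).
Proof.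
have H := isd_scale (2^-1) (isd_add (isd_expc c d) (isd_expc (- c) d)).
under [fun x => _]funext => x do rewrite /coshR -mulNr mulrC.
apply: isd_eq H _.
by rewrite /sinhR !mulNr; field.
Qed.

Lemma isd_sinh (c d : R) : is_derive d 1 (fun x => sinhR (c * x)) (c * coshR (c * d)).
Proof.
have H := isd_scale (2^-1) (isd_add (isd_expc c d) (isd_scale (-1) (isd_expc (- c) d))).
under [fun x => _]funext => x do rewrite /sinhR -mulNr mulrC -[X in _ - X]mul1r -mulNr.
apply: isd_eq H _.
by rewrite /coshR !mulNr; field.
Qed.

Lemma isd_GY (s d : R) : d != 0 ->
  is_derive d 1 (fun x => s * Num.sg x * sinhR (nu / 2 * x) + s * sinhR (nu / 2 * x))
    (s * Num.sg d * (nu / 2 * coshR (nu / 2 * d)) + s * (nu / 2 * coshR (nu / 2 * d))).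
Proof.
move=> d0.
have H := isd_add (isd_scale (s * Num.sg d) (isd_sinh (nu / 2) d)) (isd_scale s (isd_sinh (nu / 2) d)).
apply: (near_eq_is_derive _ H).
case: (ltgtP d 0) d0 => [dn|dp|->] // _.
  by apply: filterS (lt_nbhsl dn) => y yn; rewrite !ltr0_sg.
by apply: filterS (lt_nbhsr dp) => y yp; rewrite !gtr0_sg.
Qed.

Lemma isd_GX (d : R) a b : is_derive d 1
  (fun x => Num.sqrt (p a * p b) * coshR (nu / 2 * x) + gamma / 2 * (Num.sqrt (p a * p b) * sinhR (nu / 2 * x)))
  (Num.sqrt (p a * p b) * (nu / 2 * sinhR (nu / 2 * d)) + gamma / 2 * (Num.sqrt (p a * p b) * (nu / 2 * coshR (nu / 2 * d)))).
Proof.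
exact: (isd_add (isd_scale (Num.sqrt (p a * p b)) (isd_cosh (nu / 2) d))
  (isd_scale (gamma / 2) (isd_scale (Num.sqrt (p a * p b)) (isd_sinh (nu / 2) d)))).
Qed.

Lemma mder_Xq i : mder (Xqf i) (q i) (DqX i).
Proof.
move=> a b.
have H := @isd_diffq _ (Xd a b) i a b (fun _ => isd_GX (q a - q b) a b).
under [fun s => _]funext => s do rewrite /Xqf !mxE.
apply: isd_eq H _.
by rewrite DqX_E; ring.
Qed.

Lemma isd_GY' (d : R) a b : d != 0 -> is_derive d 1
  (fun x => Num.sqrt (p a * p b) * Num.sg x * sinhR (nu / 2 * x) + Num.sqrt (p a * p b) * sinhR (nu / 2 * x))
  (Num.sqrt (p a * p b) * Num.sg d * (nu / 2 * coshR (nu / 2 * d)) + Num.sqrt (p a * p b) * (nu / 2 * coshR (nu / 2 * d))).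
Proof. exact: isd_GY. Qed.

Lemma mder_Yq i : mder (Yqf i) (q i) (DqY i).
Proof.
move=> a b.
have hY : a != b -> is_derive (q a - q b) 1
  (fun x => Num.sqrt (p a * p b) * Num.sg x * sinhR (nu / 2 * x) + Num.sqrt (p a * p b) * sinhR (nu / 2 * x)) (Yd a b).
  move=> ab.
  have hd : q a - q b != 0 by rewrite subr_eq0; apply/eqP => /qinj /eqP; rewrite (negPf ab).
  rewrite /Yd /sgnq sqr_sg hd mul1r /xx.
  exact: isd_GY'.
have H := @isd_diffq _ (Yd a b) i a b hY.
under [fun s => _]funext => s do rewrite /Yqf !mxE /sgnq.
apply: isd_eq H _.
by rewrite DqY_E; ring.
Qed.

Lemma isd_sub {f g : R -> R} {t df dg : R} : is_derive t 1 f df -> is_derive t 1 g dg ->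
  is_derive t 1 (fun s => f s - g s) (df - dg).
Proof. by move=> hf hg; apply: is_deriveB. Qed.

Lemma isd_val {f : R -> R} {t df : R} : is_derive t 1 f df -> 'D_1 f t = df.
Proof. by move=> H; exact: derive_val. Qed.

Lemma hfrak_eq_p m i (t : R) : (0 < m)%N ->
  hfrak nu gamma m (upd p i t) q / m%:R = \tr (Xpf i t *m mxpow (Ypf i t) m.-1).
Proof. by move=> m0; rewrite /hfrak [_%:R * _]mulrC mulfK // pnatr_eq0 -lt0n. Qed.
Lemma hfrak_eq_q m i (t : R) : (0 < m)%N ->
  hfrak nu gamma m p (upd q i t) / m%:R = \tr (Xqf i t *m mxpow (Yqf i t) m.-1).
Proof. by move=> m0; rewrite /hfrak [_%:R * _]mulrC mulfK // pnatr_eq0 -lt0n. Qed.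

Lemma dP_hfrak m i : (0 < m)%N ->
  dP (fun p' q' => hfrak nu gamma m p' q' / m%:R) p q i = DPt Xm Ym m.-1 i.
Proof.
move=> m0; rewrite /dP derive1E /=.
under [fun t => _]funext => t do rewrite hfrak_eq_p //.
have H := isd_trace (mder_mul (mder_Xp i) (mder_pow m.-1 (mder_Yp i))).
by rewrite (isd_val H) /Xpf /Ypf upd_same.
Qed.

Lemma dQ_hfrak m i : (0 < m)%N ->
  dQ (fun p' q' => hfrak nu gamma m p' q' / m%:R) p q i = LP Xm Ym Xdm Ydm m.-1 i.
Proof.
move=> m0; rewrite /dQ derive1E /=.
under [fun t => _]funext => t do rewrite hfrak_eq_q //.
have H := isd_trace (mder_mul (mder_Xq i) (mder_pow m.-1 (mder_Yq i))).
by rewrite (isd_val H) /Xqf /Yqf upd_same.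
Qed.

Lemma dP_pcoord k y : dP (pcoord k) p q y = (y == k)%:R.
Proof.
rewrite /dP derive1E /pcoord /upd eq_sym.
case: (eqVneq y k) => _ /=; last exact: (isd_val (isd_cst _ _)).
exact: (isd_val (is_derive_id _ _)).
Qed.
Lemma dQ_pcoord k y : dQ (pcoord k) p q y = 0.
Proof. by rewrite /dQ derive1E /pcoord; exact: (isd_val (isd_cst _ _)). Qed.
Lemma dP_qdiff i j y : dP (qdiff i j) p q y = 0.
Proof. by rewrite /dP derive1E /qdiff; exact: (isd_val (isd_cst _ _)). Qed.
Lemma dQ_qdiff i j y : dQ (qdiff i j) p q y = (i == y)%:R - (j == y)%:R.
Proof.
rewrite /dQ derive1E /qdiff.
exact: (isd_val (isd_sub (isd_upd q y i (q y)) (isd_upd q y j (q y)))).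
Qed.

Lemma sum_only (f : 'I_N -> R) k : (forall y, y != k -> f y = 0) -> \sum_(y < N) f y = f k.
Proof. by move=> H; rewrite (bigD1 k) //= big1 ?addr0 // => y /H. Qed.

Lemma sum_delta2 (g : 'I_N -> R) i j :
  \sum_(y < N) ((i == y)%:R - (j == y)%:R) * g y = g i - g j.
Proof.
under eq_bigr => y _ do rewrite mulrBl.
rewrite sumrB (@sum_only _ i) ?eqxx ?mul1r; last first.
  by move=> y yi; rewrite eq_sym (negPf yi) mul0r.
rewrite (@sum_only _ j) ?eqxx ?mul1r //.
by move=> y yj; rewrite eq_sym (negPf yj) mul0r.
Qed.

Lemma neqF {a b : 'I_N} : a != b -> (b == a) = false.
Proof. by rewrite eq_sym => /negPf. Qed.

Lemma PB1_p F k : PB (@B1 R N) F (pcoord k) p q = dQ F p q k.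
Proof.
rewrite /PB /=.
rewrite (@sum_only _ k) => [|x xk].
  rewrite (@sum_only _ k) => [|y yk]; first by rewrite !dP_pcoord !dQ_pcoord eqxx /=; ring.
  by rewrite !dP_pcoord !dQ_pcoord ?(negPf yk) ?(neqF yk) /=; ring.
rewrite (@sum_only _ k) => [|y yk].
  by rewrite !dP_pcoord !dQ_pcoord eqxx ?(negPf xk) ?(neqF xk) /=; ring.
by rewrite !dP_pcoord !dQ_pcoord ?(negPf yk) ?(neqF yk) /=; ring.
Qed.

Lemma PB2_p F k : PB (@B2 R N gamma nu) F (pcoord k) p q =
  \sum_(x < N) (dP F p q x * PPv x k + dQ F p q x * QPv x k).
Proof.
rewrite /PB /=; apply: eq_bigr => x _.
rewrite (@sum_only _ k) => [|y yk].
  by rewrite !dP_pcoord !dQ_pcoord eqxx /PPv /QPv /=; ring.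
by rewrite !dP_pcoord !dQ_pcoord ?(negPf yk) ?(neqF yk) /=; ring.
Qed.

Lemma PB1_q F i j : PB (@B1 R N) F (qdiff i j) p q = - (dP F p q i - dP F p q j).
Proof.
rewrite /PB /=.
transitivity (\sum_(x < N) ((i == x)%:R - (j == x)%:R) * (- dP F p q x)); last first.
  by rewrite sum_delta2; ring.
apply: eq_bigr => x _.
rewrite (@sum_only _ x) => [|y yx].
  by rewrite !dP_qdiff !dQ_qdiff eqxx /=; ring.
by rewrite !dP_qdiff !dQ_qdiff ?(negPf yx) ?(neqF yx) /=; ring.
Qed.

Lemma PB2_q F i j : PB (@B2 R N gamma nu) F (qdiff i j) p q =
  \sum_(x < N) (- dP F p q x * (QPv i x - QPv j x) + dQ F p q x * (QQv x i - QQv x j)).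
Proof.
rewrite /PB /=; apply: eq_bigr => x _.
transitivity (\sum_(y < N) ((i == y)%:R - (j == y)%:R) * (- dP F p q x * QPv y x + dQ F p q x * QQv x y)).
  by apply: eq_bigr => y _; rewrite !dP_qdiff !dQ_qdiff /QPv /QQv; ring.
by rewrite sum_delta2; ring.
Qed.

Lemma main_sec m i j k : (1 <= m <= 3)%N ->
    PB (@B1 R N) (fun p' q' => hfrak nu gamma m.+1 p' q' / (m.+1)%:R) (pcoord k) p q
      = PB (@B2 R N gamma nu) (fun p' q' => hfrak nu gamma m p' q' / m%:R) (pcoord k) p q
 /\ PB (@B1 R N) (fun p' q' => hfrak nu gamma m.+1 p' q' / (m.+1)%:R) (qdiff i j) p q
      = PB (@B2 R N gamma nu) (fun p' q' => hfrak nu gamma m p' q' / m%:R) (qdiff i j) p q.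
Proof.
move=> /andP[m1 m3].
have m0 : (0 < m)%N by [].
rewrite PB1_p PB2_p PB1_q PB2_q !dQ_hfrak // !dP_hfrak //.
under eq_bigr => x _ do rewrite dP_hfrak // dQ_hfrak //.
under [in X in _ /\ _ = X]eq_bigr => x _ do rewrite dP_hfrak // dQ_hfrak //.
have Hsum : forall n, \sum_(x < N) (- DPt Xm Ym n x * (QPv i x - QPv j x) + LP Xm Ym Xdm Ydm n x * (QQv x i - QQv x j))
   = RQ Xm Ym Xdm Ydm n i - RQ Xm Ym Xdm Ydm n j.
  by move=> n; rewrite /RQ -sumrB; apply: eq_bigr => x _; ring.
have E : forall a b c d : R, - a - c = - b - d -> - (a - b) = c - d by move=> a b c d H; lra.
rewrite Hsum /=.
case: m m1 m3 m0 => [|[|[|[|m]]]] // _ _ _; split.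
- apply: peq1_gen => a b; by rewrite ?(Xm_E, Ym_E, Xdm_E, Ydm_E).
- apply: E; apply: qeq1_gen => a b; by rewrite ?(Xm_E, Ym_E, Xdm_E, Ydm_E).
- apply: peq2_gen => a b; by rewrite ?(Xm_E, Ym_E, Xdm_E, Ydm_E).
- apply: E; apply: qeq2_gen => a b; by rewrite ?(Xm_E, Ym_E, Xdm_E, Ydm_E).
- apply: peq3_gen => a b; by rewrite ?(Xm_E, Ym_E, Xdm_E, Ydm_E).
- apply: E; apply: qeq3_gen => a b; by rewrite ?(Xm_E, Ym_E, Xdm_E, Ydm_E).
Qed.

End S.

Theorem mainTheorem11 (R : realType) (N : nat) (nu gamma : R)
  (p q : 'I_N -> R) :
  (2 <= N)%N -> nu != 0 -> gamma != 2 -> gamma != -2 ->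
  (forall i, 0 < p i) -> injective q ->
  forall m : nat, (1 <= m <= 3)%N ->
  forall i j k : 'I_N,
    PB (@B1 R N) (fun p' q' => hfrak nu gamma m.+1 p' q' / (m.+1)%:R) (pcoord k) p q
      = PB (@B2 R N gamma nu) (fun p' q' => hfrak nu gamma m p' q' / m%:R) (pcoord k) p q
 /\ PB (@B1 R N) (fun p' q' => hfrak nu gamma m.+1 p' q' / (m.+1)%:R) (qdiff i j) p q
      = PB (@B2 R N gamma nu) (fun p' q' => hfrak nu gamma m p' q' / m%:R) (qdiff i j) p q.
Proof.
move=> _ nu0 _ _ pos qinj m hm i j k.
exact: main_sec.
Qed.
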